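(* Let $L$ be a language, $\downarrow_1,\downarrow_2$ compilers from $L$ to $L$, $\sim_1,\sim_2\subseteq\mathrm{Tr}_L\times\mathrm{Tr}_L$ trace relations and $C_1,C_2$ classes of $L$-properties. Assume $\mathrm{RTP}^{\sigma}(\downarrow_1,C_1,\sim_1)$ and $\mathrm{RTP}^{\sigma}(\downarrow_2,C_2,\sim_2)$; that $\sim_1$ is well-formed for $C_2$ and $\sim_2$ is well-formed for $C_1$; and that $\tilde\sigma_{\sim_2}(C_1)=C_1$ and $\tilde\sigma_{\sim_1}(C_2)=C_2$. Then $\mathrm{RTP}^{\sigma}(p\mapsto\downarrow_2(\downarrow_1(p)),\ C_1\cap C_2,\ \sim_1\bullet\sim_2)$ and $\mathrm{RTP}^{\sigma}(p\mapsto\downarrow_1(\downarrow_2(p)),\ C_2\cap C_1,\ \sim_2\bullet\sim_1)$.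
   Context: A language $L$ consists of: a set of partial programs (components), a set of contexts, a set of whole programs, a partial linking operation $\mathrm{link}(c,p)$ producing a whole program from a context $c$ and a component $p$, a set $\mathrm{Tr}_L$ of traces, and an execution relation $W\Downarrow t$ meaning that whole program $W$ terminates producing trace $t$. A property is a set $\pi\subseteq\mathrm{Tr}_L$; a class is a set of properties. $W\models\pi$ iff every $t$ with $W\Downarrow t$ lies in $\pi$. $p\models_R\pi$ iff for every context $c$ and whole program $W$ with $\mathrm{link}(c,p)=W$, $W\models\pi$. A compiler from $L_S$ to $L_T$ is a function from $L_S$-components to $L_T$-components. For $\sim\subseteq\mathrm{Tr}_S\times\mathrm{Tr}_T$, $\sigma_\sim(\pi_T)=\{t_S\mid\forall t_T,\ t_S\sim t_T\Rightarrow t_T\in\pi_T\}$ and $\tilde\sigma_\sim(C_T)=\{\sigma_\sim(\pi)\mid\pi\in C_T\}$. $\mathrm{RTP}^{\sigma}(\downarrow,C_T,\sim)$ holds iff for every $\pi_T\in C_T$ and every $L_S$-component $p$, if $p\models_R\sigma_\sim(\pi_T)$ then $\downarrow(p)\models_R\pi_T$. A relation $\sim$ is well-formed for $C_T$ iff for all $\pi_T\in C_T$, $\sigma_\sim(\pi_T)\in\tilde\sigma_\sim(C_T)$. $t\,(\sim_1\bullet\sim_2)\,t''$ iff there exists $t'$ with $t\sim_1 t'$ and $t'\sim_2 t''$. *)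

(* Defs.v *)
Record Language := {
  comp : Type;
  ctx : Type;
  whole : Type;
  trace : Type;
  link : ctx -> comp -> option whole;
  exec : whole -> trace -> Prop
}.

Definition prop (L : Language) := trace L -> Prop.
Definition class (L : Language) := prop L -> Prop.

Definition sat (L : Language) (W : whole L) (pi : prop L) : Prop :=
  forall t, exec L W t -> pi t.

Definition rsat (L : Language) (p : comp L) (pi : prop L) : Prop :=
  forall (c : ctx L) (W : whole L), link L c p = Some W -> sat L W pi.

Definition compiler (LS LT : Language) := comp LS -> comp LT.

Definition sigma (LS LT : Language) (rel : trace LS -> trace LT -> Prop)
  (piT : prop LT) : prop LS :=
  fun tS => forall tT, rel tS tT -> piT tT.

Definition sigma_tilde (LS LT : Language) (rel : trace LS -> trace LT -> Prop)
  (CT : class LT) : class LS :=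
  fun piS => exists piT, CT piT /\ piS = sigma LS LT rel piT.

Definition RTP_sigma (LS LT : Language) (cmp : compiler LS LT) (CT : class LT)
  (rel : trace LS -> trace LT -> Prop) : Prop :=
  forall (piT : prop LT) (p : comp LS),
    CT piT -> rsat LS p (sigma LS LT rel piT) -> rsat LT (cmp p) piT.

Definition well_formed (LS LT : Language) (rel : trace LS -> trace LT -> Prop)
  (CT : class LT) : Prop :=
  forall piT, CT piT -> sigma_tilde LS LT rel CT (sigma LS LT rel piT).

Definition rel_comp {A B C : Type} (r1 : A -> B -> Prop) (r2 : B -> C -> Prop)
  : A -> C -> Prop :=
  fun a c => exists b, r1 a b /\ r2 b c.

Definition class_inter (L : Language) (C1 C2 : class L) : class L :=
  fun pi => C1 pi /\ C2 pi.

Definition class_eq (L : Language) (C1 C2 : class L) : Prop :=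
  forall pi, C1 pi <-> C2 pi.

(* Main.v *)
Require Import Defs.

Lemma half (L : Language) (c1 c2 : compiler L L)
  (r1 r2 : trace L -> trace L -> Prop) (C1 C2 : class L) :
  RTP_sigma L L c1 C1 r1 ->
  RTP_sigma L L c2 C2 r2 ->
  class_eq L (sigma_tilde L L r2 C1) C1 ->
  RTP_sigma L L (fun p => c2 (c1 p)) (class_inter L C1 C2) (rel_comp r1 r2).
Proof.
  intros H1 H2 E piT p [HC1 HC2] Hs.
  apply H2; [exact HC2|].
  apply H1.
  - apply E. exists piT. split; [exact HC1|reflexivity].
  - intros c W HW t Ht tT Hr tT' Hr'.
    apply (Hs c W HW t Ht tT'). exists tT. split; assumption.
Qed.

Theorem corollary3p2 (L : Language) (c1 c2 : compiler L L)
  (r1 r2 : trace L -> trace L -> Prop) (C1 C2 : class L) :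
  RTP_sigma L L c1 C1 r1 ->
  RTP_sigma L L c2 C2 r2 ->
  well_formed L L r1 C2 ->
  well_formed L L r2 C1 ->
  class_eq L (sigma_tilde L L r2 C1) C1 ->
  class_eq L (sigma_tilde L L r1 C2) C2 ->
  RTP_sigma L L (fun p => c2 (c1 p)) (class_inter L C1 C2) (rel_comp r1 r2) /\
  RTP_sigma L L (fun p => c1 (c2 p)) (class_inter L C2 C1) (rel_comp r2 r1).
Proof.
  intros H1 H2 _ _ E1 E2. split.
  - exact (half L c1 c2 r1 r2 C1 C2 H1 H2 E1).
  - exact (half L c2 c1 r2 r1 C2 C1 H2 H1 E2).
Qed.
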